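(* Let $p$ be a well-formed cons-free program, and suppose $[\![p]\!](d_1,\dots,d_M)\mapsto b$ is obtained by a derivation tree $T$. Then for every judgement in $T$ of one of the forms $p,\gamma\vdash s\to w$, $p,\gamma\vdash^{\mathrm{if}} b',s_1,s_2\to w$, or $p\vdash^{\mathrm{call}} f\,v_1\cdots v_n\to w$, and for every expression $t$ such that (a) $w\unrhd t$, (b) $b'\unrhd t$, (c) $\gamma(x)\unrhd t$ for some variable $x$, or (d) $v_i\unrhd t$ for some $i$: if $t$ has the form $c\,b_1\cdots b_m$ with $c\in\mathcal{C}$, then $t\in\mathcal{B}^p_{d_1,\dots,d_M}$.
   Context: Types are built from a finite set $\mathcal{S}$ of sorts (containing $\mathsf{bool}$) by $\sigma ::= \iota \mid \sigma \times \tau \mid \sigma \Rightarrow \tau$, with $\Rightarrow$ right-associative. Type order: $\mathrm{ord}(\iota)=0$ for sorts, $\mathrm{ord}(\sigma\times\tau)=\max(\mathrm{ord}(\sigma),\mathrm{ord}(\tau))$, $\mathrm{ord}(\sigma\Rightarrow\tau)=\max(\mathrm{ord}(\sigma)+1,\mathrm{ord}(\tau))$. Write $\kappa$ for a type that is a sort or a product; every type is uniquely $\sigma_1\Rightarrow\cdots\Rightarrow\sigma_m\Rightarrow\kappa$. Syntax. Fix pairwise disjoint sets of variables, data constructors $\mathcal{C}$ (containing $\mathsf{true},\mathsf{false}$) and defined symbols $\mathcal{D}$. Patterns: $\ell ::= x \mid c\,\ell_1\cdots\ell_m$ ($c\in\mathcal{C}$). Expressions: $s ::= x \mid c \mid f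 \mid \mathsf{if}\ s_1\ \mathsf{then}\ s_2\ \mathsf{else}\ s_3 \mid \mathsf{choose}\ s_1\cdots s_n \mid (s,t) \mid s\,t$ (application left-associative). A program is a finite list of clauses $f\,\ell_1\cdots\ell_k = s$ with $f \in \mathcal{D}$; its main function $f_1$ is the defined symbol of the first clause. Sub-expressions: $s \unrhd t$ iff $s = t$ or $s \rhd t$, where $(s_1,s_2)\rhd t$, $\mathsf{if}\ s_1\ \mathsf{then}\ s_2\ \mathsf{else}\ s_3 \rhd t$ and $\mathsf{choose}\ s_1\cdots s_n\rhd t$ hold if $s_i \unrhd t$ for some $i$, and $s_1\,s_2 \rhd t$ holds if $s_1 \rhd t$ or $s_2 \unrhd t$. Typing. A program is well-typed if there is an assignment $\mathcal{F}$ of simple types to $\mathcal{C}\cup\mathcal{D}$ such that: $f_1 : \kappa_1\Rightarrow\cdots\Rightarrow\kappa_M\Rightarrow\kappa$ with all $\kappa_i,\kappa$ of order $0$; each $c\in\mathcal{C}$ has type $\kappa_1\Rightarrow\cdots\Rightarrow\kappa_m\Rightarrow\iota$ with $\iota$ a sort and all $\kappa_i$ of order $0$; and for every clause $f\,\ell_1\cdots\ell_k=s$, all variables of $s$ occur in the left-hand side, each variable occurs at most once in the left-hand side, and there is a type environment $\Gamma$ for the left-hand side variables under which both sides have the same type (standard simple typing). It is well-formed if moreover constructors always occur fully applied and all clauses with the same root $f$ have the same number $\mathrm{arity}(f)$ of arguments. Semantics. Data expressions $d ::= c\,d_1\cdots d_m \mid (d,d')$; values $v ::= d \mid (v,w)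 \mid f\,v_1\cdots v_n$ with $n<\mathrm{arity}(f)$; environments $\gamma$ map variables to values and $\ell\gamma$ is instantiation. Judgements $p,\gamma\vdash s\to w$, $p,\gamma\vdash^{\mathrm{if}} d,s_2,s_3\to w$ and $p\vdash^{\mathrm{call}} f\,v_1\cdots v_n\to w$ are derived by: $p,\gamma\vdash x\to\gamma(x)$; $p,\gamma\vdash f\to w$ if $p\vdash^{\mathrm{call}} f\to w$; $p,\gamma\vdash c\,s_1\cdots s_m\to c\,b_1\cdots b_m$ if $p,\gamma\vdash s_i\to b_i$ for all $i$; $p,\gamma\vdash(s,t)\to(v,w)$ if $p,\gamma\vdash s\to v$ and $p,\gamma\vdash t\to w$; $p,\gamma\vdash \mathsf{choose}\ s_1\cdots s_n\to w$ if $p,\gamma\vdash s_i\to w$ for some $i$; $p,\gamma\vdash\mathsf{if}\ s_1\ \mathsf{then}\ s_2\ \mathsf{else}\ s_3\to w$ if $p,\gamma\vdash s_1\to d$ and $p,\gamma\vdash^{\mathrm{if}} d,s_2,s_3\to w$, where $p,\gamma\vdash^{\mathrm{if}}\mathsf{true},s_2,s_3\to w$ if $p,\gamma\vdash s_2\to w$ and $p,\gamma\vdash^{\mathrm{if}}\mathsf{false},s_2,s_3\to w$ if $p,\gamma\vdash s_3\to w$; $p,\gamma\vdash s\,t\to w$ if $p,\gamma\vdash s\to f\,v_1\cdots v_n$, $p,\gamma\vdash t\to v_{n+1}$ and $p\vdash^{\mathrm{call}} f\,v_1\cdots v_{n+1}\to w$; $p\vdash^{\mathrm{call}} f\,v_1\cdots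 v_n\to f\,v_1\cdots v_n$ if $n<\mathrm{arity}(f)$; $p\vdash^{\mathrm{call}} f\,v_1\cdots v_k\to w$ if $p,\gamma\vdash s\to w$ where $f\,\ell_1\cdots\ell_k=s$ is the first clause of $p$ for which there is $\gamma$ with domain the left-hand side variables and $v_i=\ell_i\gamma$ for all $i$. Finally $[\![p]\!](d_1,\dots,d_M)\mapsto b$ holds iff there is a derivation tree (built with these rules) for $p,[x_1:=d_1,\dots,x_M:=d_M]\vdash f_1\,x_1\cdots x_M\to b$. Cons-freeness. A clause $f\,\ell_1\cdots\ell_k=s$ is cons-free if every $t$ with $s\unrhd t$ of the form $c\,s_1\cdots s_m$ with $c\in\mathcal{C}$ is a data expression or satisfies $\ell_i\unrhd t$ for some $i$; a program is cons-free if all its clauses are. $\mathcal{B}^p_{d_1,\dots,d_M}$ denotes the set of data expressions $d$ such that $d_i\unrhd d$ for some $i$, or $s\unrhd d$ for the right-hand side $s$ of some clause of $p$. *)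

(* Defs.v *)
From Stdlib Require Import List Arith.
Import ListNotations.

Inductive sort : Type := SBool | SName (n : nat).

Inductive ty : Type :=
| TSort (s : sort)
| TProd (a b : ty)
| TArr (a b : ty).

Fixpoint ord (t : ty) : nat :=
  match t with
  | TSort _ => 0
  | TProd a b => Nat.max (ord a) (ord b)
  | TArr a b => Nat.max (S (ord a)) (ord b)
  end.

Fixpoint arrows (args : list ty) (res : ty) : ty :=
  match args with
  | [] => res
  | a :: args' => TArr a (arrows args' res)
  end.

(* Variables and defined symbols are named by nat; they live in different
   syntactic categories of [expr], hence the three sets are disjoint. *)
Definition var := nat.
Definition fsym := nat.
Inductive ctor : Type := CTrue | CFalse | CName (n : nat).

Inductive pat : Type :=
| PVar (x : var)
| PCon (c : ctor) (ls : list pat).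

Inductive expr : Type :=
| EVar (x : var)
| ECon (c : ctor)
| EFun (f : fsym)
| EIf (s1 s2 s3 : expr)
| EChoose (ss : list expr)
| EPair (s t : expr)
| EApp (s t : expr).

Definition apps (s : expr) (ts : list expr) : expr := fold_left EApp ts s.

Fixpoint pat_to_expr (l : pat) : expr :=
  match l with
  | PVar x => EVar x
  | PCon c ls => apps (ECon c) (map pat_to_expr ls)
  end.

Fixpoint pat_vars (l : pat) : list var :=
  match l with
  | PVar x => [x]
  | PCon _ ls => (fix go (ls : list pat) : list var :=
                    match ls with [] => [] | l :: ls' => pat_vars l ++ go ls' end) ls
  end.

Record clause : Type := Clause { cl_f : fsym; cl_pats : list pat; cl_rhs : expr }.
Definition program := list clause.

Definition lhs_vars (cl : clause) : list var := concat (map pat_vars (cl_pats cl)).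
Definition lhs_expr (cl : clause) : expr :=
  apps (EFun (cl_f cl)) (map pat_to_expr (cl_pats cl)).

(** * Sub-expressions:  subeq s t  is  s |>= t,  strict s t  is  s |> t *)
Inductive subeq : expr -> expr -> Prop :=
| se_refl s : subeq s s
| se_strict s t : strict s t -> subeq s t
with strict : expr -> expr -> Prop :=
| st_pair1 s1 s2 t : subeq s1 t -> strict (EPair s1 s2) t
| st_pair2 s1 s2 t : subeq s2 t -> strict (EPair s1 s2) t
| st_if1 s1 s2 s3 t : subeq s1 t -> strict (EIf s1 s2 s3) t
| st_if2 s1 s2 s3 t : subeq s2 t -> strict (EIf s1 s2 s3) t
| st_if3 s1 s2 s3 t : subeq s3 t -> strict (EIf s1 s2 s3) t
| st_choose ss si t : In si ss -> subeq si t -> strict (EChoose ss) t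
| st_app1 s1 s2 t : strict s1 t -> strict (EApp s1 s2) t
| st_app2 s1 s2 t : subeq s2 t -> strict (EApp s1 s2) t.

Inductive var_in (x : var) : expr -> Prop :=
| vi_var : var_in x (EVar x)
| vi_if1 s1 s2 s3 : var_in x s1 -> var_in x (EIf s1 s2 s3)
| vi_if2 s1 s2 s3 : var_in x s2 -> var_in x (EIf s1 s2 s3)
| vi_if3 s1 s2 s3 : var_in x s3 -> var_in x (EIf s1 s2 s3)
| vi_choose ss s : In s ss -> var_in x s -> var_in x (EChoose ss)
| vi_pair1 s t : var_in x s -> var_in x (EPair s t)
| vi_pair2 s t : var_in x t -> var_in x (EPair s t)
| vi_app1 s t : var_in x s -> var_in x (EApp s t)
| vi_app2 s t : var_in x t -> var_in x (EApp s t).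

Section Typing.
Variable F : ctor -> ty.
Variable Fd : fsym -> ty.

Inductive has_type (G : var -> option ty) : expr -> ty -> Prop :=
| ht_var x T : G x = Some T -> has_type G (EVar x) T
| ht_con c : has_type G (ECon c) (F c)
| ht_fun f : has_type G (EFun f) (Fd f)
| ht_if s1 s2 s3 T : has_type G s1 (TSort SBool) -> has_type G s2 T ->
    has_type G s3 T -> has_type G (EIf s1 s2 s3) T
| ht_choose ss T : (forall s, In s ss -> has_type G s T) -> has_type G (EChoose ss) T
| ht_pair s t A B : has_type G s A -> has_type G t B -> has_type G (EPair s t) (TProd A B)
| ht_app s t A B : has_type G s (TArr A B) -> has_type G t A -> has_type G (EApp s t) B.

Definition well_typed_with (p : program) : Prop :=
  (exists cl rest args res, p = cl :: rest /\ Fd (cl_f cl) = arrows args res /\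
       Forall (fun k => ord k = 0) args /\ ord res = 0) /\
  (forall c, exists args s, F c = arrows args (TSort s) /\
       Forall (fun k => ord k = 0) args) /\
  F CTrue = TSort SBool /\ F CFalse = TSort SBool /\
  (forall cl, In cl p ->
     (forall x, var_in x (cl_rhs cl) -> In x (lhs_vars cl)) /\
     NoDup (lhs_vars cl) /\
     exists G T, has_type G (lhs_expr cl) T /\ has_type G (cl_rhs cl) T).

Fixpoint ty_nargs (T : ty) : nat :=
  match T with TArr _ b => S (ty_nargs b) | _ => 0 end.

(* [fa_expr e n]: every constructor in e is fully applied, given that e
   itself is applied to n further arguments. *)
Inductive fa_expr : expr -> nat -> Prop :=
| fa_var x n : fa_expr (EVar x) n
| fa_fun f n : fa_expr (EFun f) n
| fa_con c : fa_expr (ECon c) (ty_nargs (F c))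
| fa_if s1 s2 s3 n : fa_expr s1 0 -> fa_expr s2 0 -> fa_expr s3 0 -> fa_expr (EIf s1 s2 s3) n
| fa_choose ss n : (forall s, In s ss -> fa_expr s 0) -> fa_expr (EChoose ss) n
| fa_pair s t n : fa_expr s 0 -> fa_expr t 0 -> fa_expr (EPair s t) n
| fa_app s t n : fa_expr s (S n) -> fa_expr t 0 -> fa_expr (EApp s t) n.

Definition well_formed_with (p : program) : Prop :=
  well_typed_with p /\
  (forall cl, In cl p -> fa_expr (lhs_expr cl) 0 /\ fa_expr (cl_rhs cl) 0) /\
  (forall cl1 cl2, In cl1 p -> In cl2 p -> cl_f cl1 = cl_f cl2 ->
     length (cl_pats cl1) = length (cl_pats cl2)).
End Typing.

Definition well_typed (p : program) : Prop := exists F Fd, well_typed_with F Fd p.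
Definition well_formed (p : program) : Prop := exists F Fd, well_formed_with F Fd p.

Inductive is_data : expr -> Prop :=
| data_con c ds : Forall is_data ds -> is_data (apps (ECon c) ds)
| data_pair d d' : is_data d -> is_data d' -> is_data (EPair d d').

Definition clause_cons_free (cl : clause) : Prop :=
  forall t, subeq (cl_rhs cl) t ->
  forall c ss, t = apps (ECon c) ss ->
  is_data t \/ exists l, In l (cl_pats cl) /\ subeq (pat_to_expr l) t.

Definition cons_free (p : program) : Prop := forall cl, In cl p -> clause_cons_free cl.

Definition env := var -> option expr.

Fixpoint inst (g : env) (l : pat) : expr :=
  match l with
  | PVar x => match g x with Some v => v | None => EVar x end
  | PCon c ls => apps (ECon c) (map (inst g) ls)
  end.

Definition arity (p : program) (f : fsym) : nat :=
  match find (fun cl => Nat.eqb (cl_f cl) f) p with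
  | Some cl => length (cl_pats cl)
  | None => 0
  end.

Definition matches_with (cl : clause) (f : fsym) (vs : list expr) (g : env) : Prop :=
  cl_f cl = f /\ (forall x, g x <> None <-> In x (lhs_vars cl)) /\
  Forall2 (fun l v => inst g l = v) (cl_pats cl) vs.

Definition matches (cl : clause) (f : fsym) (vs : list expr) : Prop :=
  exists g, matches_with cl f vs g.

Inductive judg : Type :=
| JEval (g : env) (s w : expr)
| JIf (g : env) (d s2 s3 w : expr)
| JCall (f : fsym) (vs : list expr) (w : expr).

Inductive rule (p : program) : judg -> list judg -> Prop :=
| r_var g x v : g x = Some v -> rule p (JEval g (EVar x) v) []
| r_fun g f w : rule p (JEval g (EFun f) w) [JCall f [] w]
| r_con g c ss bs : length ss = length bs ->
    rule p (JEval g (apps (ECon c) ss) (apps (ECon c) bs))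
           (map (fun sb => JEval g (fst sb) (snd sb)) (combine ss bs))
| r_pair g s t v w : rule p (JEval g (EPair s t) (EPair v w)) [JEval g s v; JEval g t w]
| r_choose g ss si w : In si ss -> rule p (JEval g (EChoose ss) w) [JEval g si w]
| r_if g s1 s2 s3 d w :
    rule p (JEval g (EIf s1 s2 s3) w) [JEval g s1 d; JIf g d s2 s3 w]
| r_iftrue g s2 s3 w : rule p (JIf g (ECon CTrue) s2 s3 w) [JEval g s2 w]
| r_iffalse g s2 s3 w : rule p (JIf g (ECon CFalse) s2 s3 w) [JEval g s3 w]
| r_app g s t f vs v w :
    rule p (JEval g (EApp s t) w)
      [JEval g s (apps (EFun f) vs); JEval g t v; JCall f (vs ++ [v]) w]
| r_partial f vs : length vs < arity p f -> rule p (JCall f vs (apps (EFun f) vs)) []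
| r_call f vs w pre cl post g :
    p = pre ++ cl :: post ->
    (forall cl', In cl' pre -> ~ matches cl' f vs) ->
    matches_with cl f vs g ->
    rule p (JCall f vs w) [JEval g (cl_rhs cl) w].

Inductive dtree : Type := Node (j : judg) (ts : list dtree).

Definition droot (t : dtree) : judg := match t with Node j _ => j end.

Inductive valid (p : program) : dtree -> Prop :=
| valid_node j ts : rule p j (map droot ts) ->
    (forall t, In t ts -> valid p t) -> valid p (Node j ts).

Inductive occurs (j : judg) : dtree -> Prop :=
| occ_root ts : occurs j (Node j ts)
| occ_child j' ts t : In t ts -> occurs j t -> occurs j (Node j' ts).

(* input variables x_1..x_M are 0..M-1 *)
Definition init_env (ds : list expr) : env :=
  fun x => if x <? length ds then Some (nth x ds (EVar x)) else None.

Definition sem_tree (p : program) (ds : list expr) (b : expr) (T : dtree) : Prop :=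
  exists cl rest, p = cl :: rest /\ valid p T /\
    droot T = JEval (init_env ds)
                (apps (EFun (cl_f cl)) (map EVar (seq 0 (length ds)))) b.

Definition inB (p : program) (ds : list expr) (d : expr) : Prop :=
  is_data d /\
  ((exists di, In di ds /\ subeq di d) \/
   (exists cl, In cl p /\ subeq (cl_rhs cl) d)).

Definition judg_reaches (j : judg) (t : expr) : Prop :=
  match j with
  | JEval g s w => subeq w t \/ exists x v, g x = Some v /\ subeq v t
  | JIf g b' s2 s3 w => subeq w t \/ subeq b' t \/ exists x v, g x = Some v /\ subeq v t
  | JCall f vs w => subeq w t \/ exists v, In v vs /\ subeq v t
  end.

(* Main.v *)
Require Import Defs.
From Stdlib Require Import List Arith.
Import ListNotations.

Fixpoint ehead (e:expr) : expr := match e with EApp a _ => ehead a | _ => e end.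
Fixpoint eargs (e:expr) : list expr := match e with EApp a b => eargs a ++ [b] | _ => [] end.

Lemma head_apps h ts : ehead (apps h ts) = ehead h.
Proof. revert h; induction ts; intros h; simpl; auto. unfold apps in *; simpl. rewrite IHts. reflexivity. Qed.

Lemma args_apps h ts : eargs (apps h ts) = eargs h ++ ts.
Proof. revert h; induction ts; intros h; simpl. rewrite app_nil_r; auto.
 unfold apps in *; simpl. rewrite IHts. simpl. rewrite <- app_assoc. reflexivity. Qed.

Lemma apps_con_inj c c' ss ss' : apps (ECon c) ss = apps (ECon c') ss' -> c = c' /\ ss = ss'.
Proof. intros H. split.
 - apply (f_equal ehead) in H. rewrite !head_apps in H. simpl in H. congruence.
 - apply (f_equal eargs) in H. rewrite !args_apps in H. simpl in H. exact H. Qed.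

Lemma apps_snoc h ts t : apps h (ts ++ [t]) = EApp (apps h ts) t.
Proof. unfold apps. rewrite fold_left_app. reflexivity. Qed.

Scheme subeq_mut := Induction for subeq Sort Prop with strict_mut := Induction for strict Sort Prop.

Lemma sub_trans_aux : (forall a b, subeq a b -> forall c, subeq b c -> subeq a c) /\
  (forall a b, strict a b -> forall c, subeq b c -> strict a c).
Proof.
 Ltac tt := cbv beta; intros; first [ solve [auto] | apply st_pair1; solve [auto] | apply st_pair2; solve [auto]
   | apply st_if1; solve [auto] | apply st_if2; solve [auto] | apply st_if3; solve [auto]
   | eapply st_choose; solve [eauto] | apply st_app1; solve [auto] | apply st_app2; solve [auto]
   | apply se_strict; solve [auto] ].
 split.
 - apply (subeq_mut (fun a b _ => forall c, subeq b c -> subeq a c)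
   (fun a b _ => forall c, subeq b c -> strict a c)); tt.
 - apply (strict_mut (fun a b _ => forall c, subeq b c -> subeq a c)
   (fun a b _ => forall c, subeq b c -> strict a c)); tt.
Qed.

Lemma subeq_trans a b c : subeq a b -> subeq b c -> subeq a c.
Proof. intros; eapply (proj1 sub_trans_aux); eauto. Qed.
Lemma strict_trans a b c : strict a b -> subeq b c -> strict a c.
Proof. intros; eapply (proj2 sub_trans_aux); eauto. Qed.

Lemma strict_apps h es t : strict (apps h es) t -> strict h t \/ exists e, In e es /\ subeq e t.
Proof. revert t. induction es using rev_ind; intros t H; simpl in *; auto.
 rewrite apps_snoc in H. inversion H; subst.
 - destruct (IHes _ H3) as [?|[e [? ?]]]; auto. right; exists e; rewrite in_app_iff; auto.
 - right. exists x. rewrite in_app_iff; simpl; auto. Qed.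

Lemma In_strict_apps h es e : In e es -> strict (apps h es) e.
Proof. induction es using rev_ind; intros Hi; simpl in *. contradiction.
 rewrite apps_snoc. rewrite in_app_iff in Hi; destruct Hi as [Hi|[Hi|[]]].
 - apply st_app1; auto.
 - subst; apply st_app2; constructor. Qed.

Definition atomic (e : expr) : Prop := match e with ECon _ | EFun _ | EVar _ => True | _ => False end.
Lemma strict_atom e t : strict e t -> atomic e -> False.
Proof. intros H; destruct H; simpl; auto. Qed.

Lemma strict_apps_atom h es t : atomic h -> strict (apps h es) t -> exists e, In e es /\ subeq e t.
Proof. intros Hh H. destruct (strict_apps _ _ _ H) as [H'|H']; auto. exfalso; eapply strict_atom; eauto. Qed.

Lemma apps_head e : apps (ehead e) (eargs e) = e.
Proof. induction e; simpl; auto. rewrite apps_snoc, IHe1. reflexivity. Qed.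

Definition chead t := exists c, ehead t = ECon c.

Fixpoint dtree_ind' (P : dtree -> Prop)
  (H : forall j ts, (forall t, In t ts -> P t) -> P (Node j ts)) (t : dtree) : P t :=
  match t with Node j ts => H j ts
   ((fix go (l : list dtree) : forall t, In t l -> P t :=
      match l with
      | [] => fun t (i : In t []) => False_ind _ i
      | t0 :: l' => fun t (i : In t (t0 :: l')) =>
          match i with
          | or_introl e => eq_ind t0 P (dtree_ind' P H t0) t e
          | or_intror i' => go l' t i'
          end
      end) ts) end.

Fixpoint pat_ind' (P : pat -> Prop) (H1 : forall x, P (PVar x))
  (H : forall c ls, (forall l, In l ls -> P l) -> P (PCon c ls)) (l : pat) : P l :=
  match l with PVar x => H1 x | PCon c ls => H c ls
   ((fix go (l : list pat) : forall t, In t l -> P t :=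
      match l with
      | [] => fun t (i : In t []) => False_ind _ i
      | t0 :: l' => fun t (i : In t (t0 :: l')) =>
          match i with
          | or_introl e => eq_ind t0 P (pat_ind' P H1 H t0) t e
          | or_intror i' => go l' t i'
          end
      end) ls) end.

Lemma pat_vars_con c ls : pat_vars (PCon c ls) = concat (map pat_vars ls).
Proof. induction ls; simpl in *; auto. rewrite IHls. reflexivity. Qed.

Lemma pat_var_sub g l x v : In x (pat_vars l) -> g x = Some v -> subeq (inst g l) v.
Proof. revert x v. induction l using pat_ind'; intros y v Hi Hg.
 - simpl in Hi; destruct Hi as [<-|[]]. simpl. rewrite Hg. constructor.
 - rewrite pat_vars_con in Hi. apply in_concat in Hi. destruct Hi as [vs [Hvs Hy]].
   apply in_map_iff in Hvs. destruct Hvs as [l' [<- Hl']].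
   simpl. apply se_strict. eapply strict_trans; [|eapply H; eauto].
   apply In_strict_apps. apply in_map; auto. Qed.

Lemma pat_sub g l t : subeq (pat_to_expr l) t -> chead t ->
  exists l', t = pat_to_expr l' /\ subeq (inst g l) (inst g l').
Proof. revert t; induction l using pat_ind'; intros t Hs [c0 Hc].
 - inversion Hs; subst. simpl in Hc; discriminate. exfalso; eapply strict_atom; eauto; exact I.
 - inversion Hs; subst. exists (PCon c ls); split; auto; constructor.
   simpl in H0. apply strict_apps_atom in H0; [|exact I]. destruct H0 as [e [He Hst]].
   apply in_map_iff in He. destruct He as [l [<- Hl]].
   destruct (H l Hl t Hst (ex_intro _ _ Hc)) as [l' [E S]]. exists l'; split; auto.
   simpl. apply se_strict. eapply strict_trans; [|apply S]. apply In_strict_apps, in_map; auto. Qed.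

Ltac bad_apps := match goal with
 | H : apps (ECon _) _ = _ |- _ => apply (f_equal ehead) in H; rewrite head_apps in H; simpl in H; discriminate H
 | H : _ = apps (ECon _) _ |- _ => apply (f_equal ehead) in H; rewrite head_apps in H; simpl in H; discriminate H
 end.

Ltac kids := repeat (match goal with H: _ :: _ = map droot ?ts |- _ => symmetry in H end);
 repeat (match goal with H: map droot ?ts = _ :: _ |- _ =>
  let t := fresh "k" in let ts' := fresh "ks" in destruct ts as [|t ts']; [discriminate H|];
  simpl in H; injection H as ? H end).

Lemma kid_of ts x : In x (map droot ts) -> exists t, In t ts /\ droot t = x.
Proof. intros H; apply in_map_iff in H; destruct H as [t [? ?]]; eauto. Qed.

Lemma combine_map_eq {A B} (f : A -> B) xs bs : length xs = length bs ->
  (forall x b, In (x,b) (combine xs bs) -> b = f x) -> bs = map f xs.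
Proof. revert bs; induction xs; intros [|b bs] Hl H; simpl in *; try discriminate; auto.
 f_equal; auto. Qed.

Lemma combine_in_map {A B C} (f : A -> C) xs (bs : list B) x b :
  In (x,b) (combine xs bs) -> In (f x, b) (combine (map f xs) bs).
Proof. revert bs; induction xs; intros [|b' bs] H; simpl in *; auto. destruct H as [H|H].
 inversion H; subst; auto. right; auto. Qed.

Lemma combine_in_r {A B} (xs : list A) (bs : list B) b : length xs = length bs -> In b bs ->
  exists x, In (x,b) (combine xs bs).
Proof. revert bs; induction xs; intros [|b' bs] Hl H; simpl in *; try discriminate; try contradiction.
 destruct H as [<-|H]; eauto. destruct (IHxs bs) as [x ?]; auto. eauto. Qed.

Lemma ceval p : forall T, valid p T -> forall g e w, droot T = JEval g e w -> chead e -> ehead w = ehead e.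
Proof.
 induction T using dtree_ind'; intros Hv g e w Hr [c Hc]. inversion Hv; subst. simpl in Hr; subst.
 match goal with H : rule _ _ _ |- _ => inversion H; subst end; simpl in Hc; try discriminate.
 - rewrite !head_apps; auto.
 - kids. match goal with Hk : droot ?k = JEval _ _ (apps _ _), Hval : forall t, In t (?k :: _) -> valid _ t |- _ =>
   assert (E := H _ (or_introl eq_refl) (Hval _ (or_introl eq_refl)) _ _ _ Hk (ex_intro _ _ Hc)) end.
   rewrite head_apps in E. simpl in E. congruence.
Qed.

Ltac app_contra := match goal with
 | Hv : forall t, In t (?k :: _) -> valid _ t, H1 : droot ?k = JEval ?g ?s (apps (EFun ?f) ?vs),
   Hc : ehead ?s = ECon ?c |- _ =>
   let E := fresh in assert (E := ceval _ k (Hv _ (or_introl eq_refl)) _ _ _ H1 (ex_intro _ _ Hc));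
   rewrite head_apps in E; simpl in E; congruence end.

Lemma data_app s1 s2 : is_data (EApp s1 s2) -> is_data s1 /\ is_data s2.
Proof. intros H; inversion H; subst. revert H0 H1. induction ds as [|x ds _] using rev_ind; intros H0 H1. discriminate.
 rewrite apps_snoc in H0. injection H0 as E1 E2; subst. apply Forall_app in H1. destruct H1 as [H1 H2].
 inversion H2; subst. split; auto. constructor; auto. Qed.

Lemma data_sub d t : subeq d t -> is_data d -> is_data t.
Proof.
 revert d t. apply (subeq_mut (fun a b _ => is_data a -> is_data b) (fun a b _ => is_data a -> is_data b));
 cbv beta; intros; auto;
 try (inversion H0; subst; solve [auto | bad_apps]);
 try (inversion H; subst; solve [auto | bad_apps]);
 try (apply H; apply (data_app _ _ H0)); try (apply H; apply (data_app _ _ H)).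
Qed.

Lemma head_of_eq_app c ds s t : apps (ECon c) ds = EApp s t -> ehead s = ECon c.
Proof. intros H. apply (f_equal ehead) in H. rewrite head_apps in H. simpl in H. congruence. Qed.

Lemma con_kid g ss bs ts s b :
  map (fun sb => JEval g (fst sb) (snd sb)) (combine ss bs) = map droot ts ->
  In (s,b) (combine ss bs) -> exists t, In t ts /\ droot t = JEval g s b.
Proof. intros E Hi. apply kid_of. rewrite <- E.
 apply (in_map (fun sb => JEval g (fst sb) (snd sb))) in Hi. exact Hi. Qed.

Lemma con_kid_inv g ss bs ts t :
  map (fun sb => JEval g (fst sb) (snd sb)) (combine ss bs) = map droot ts ->
  In t ts -> exists s b, In (s,b) (combine ss bs) /\ droot t = JEval g s b.
Proof. intros E Hi. apply (in_map droot) in Hi. rewrite <- E in Hi.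
 apply in_map_iff in Hi. destruct Hi as [[s b] [? ?]]. eauto. Qed.

Lemma data_eval p : forall T, valid p T -> forall g d w, droot T = JEval g d w -> is_data d -> w = d.
Proof.
 induction T using dtree_ind'; intros Hv g d w Hr Hd. inversion Hv; subst. simpl in Hr; subst.
 match goal with H : rule _ _ _ |- _ => inversion H; subst end;
  try (inversion Hd; subst; bad_apps).
 -
   inversion Hd; subst; [|bad_apps].
   match goal with E : apps _ _ = apps _ _ |- _ => apply apps_con_inj in E; destruct E; subst end.
   f_equal. rewrite <- (map_id ss). apply combine_map_eq; auto. intros s b Hin.
   match goal with E : map _ (combine _ _) = map droot _ |- _ =>
     destruct (con_kid _ _ _ _ _ _ E Hin) as [k [Hk Hkr]] end.
   eapply H; eauto. rewrite Forall_forall in *. apply in_combine_l in Hin. auto.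
 -
   inversion Hd; subst; [bad_apps|]. kids.
   match goal with Hval : forall t, In t (?k0 :: ?k1 :: _) -> valid _ t,
     E0 : droot ?k0 = _, E1 : droot ?k1 = _ |- _ =>
     rewrite (H _ (or_introl eq_refl) (Hval _ (or_introl eq_refl)) _ _ _ E0 ltac:(assumption));
     rewrite (H _ (or_intror (or_introl eq_refl)) (Hval _ (or_intror (or_introl eq_refl))) _ _ _ E1 ltac:(assumption)) end.
   reflexivity.
 -
   inversion Hd; subst. match goal with E : apps _ _ = EApp _ _ |- _ => apply head_of_eq_app in E end.
   kids. app_contra.
Qed.

Lemma pat_eval p : forall T, valid p T -> forall g l w, droot T = JEval g (pat_to_expr l) w -> w = inst g l.
Proof.
 induction T using dtree_ind'; intros Hv g l w Hr. inversion Hv; subst. simpl in Hr; subst.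
 destruct l as [y|c0 ls]; simpl in *;
 match goal with H : rule _ _ _ |- _ => inversion H; subst end; try bad_apps.
 - match goal with E : g y = Some _ |- _ => rewrite E end. reflexivity.
 - match goal with E : apps _ _ = apps _ _ |- _ => apply apps_con_inj in E; destruct E; subst end.
   f_equal.
   apply combine_map_eq. rewrite length_map in *; auto.
   intros l b Hin.
   match goal with E : map _ (combine _ _) = map droot _ |- _ =>
     destruct (con_kid _ _ _ _ _ _ E (combine_in_map pat_to_expr _ _ _ _ Hin)) as [k [Hk Hkr]] end.
   eapply H; eauto.
 - match goal with E : EApp _ _ = apps _ _ |- _ => symmetry in E; apply head_of_eq_app in E end. kids. app_contra.
Qed.

Section Main.
Variable p : program.
Variable ds : list expr.

Definition good v := forall t, subeq v t -> chead t -> inB p ds t.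
Definition goodenv (g : env) := forall x v, g x = Some v -> good v.
Definition Pexpr (g : env) s := forall t, subeq s t -> chead t ->
  inB p ds t \/ exists l, t = pat_to_expr l /\ good (inst g l).
Definition Inv j := match j with
 | JEval g s _ => goodenv g /\ Pexpr g s
 | JIf g d s2 s3 _ => goodenv g /\ good d /\ Pexpr g s2 /\ Pexpr g s3
 | JCall _ vs _ => forall v, In v vs -> good v end.
Definition jout j := match j with JEval _ _ w | JIf _ _ _ _ w | JCall _ _ w => w end.
Definition fine j := forall t, judg_reaches j t -> chead t -> inB p ds t.

Lemma good_sub v v' : good v -> subeq v v' -> good v'.
Proof. intros G S t St Ct. apply G; auto. eapply subeq_trans; eauto. Qed.

Lemma no_chead_fun f vs : chead (apps (EFun f) vs) -> False.
Proof. intros [c Hc]. rewrite head_apps in Hc. discriminate. Qed.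

Lemma good_fun_inv f vs v : good (apps (EFun f) vs) -> In v vs -> good v.
Proof. intros G Hi. eapply good_sub; eauto. apply se_strict, In_strict_apps; auto. Qed.

Lemma good_fun f vs : (forall v, In v vs -> good v) -> good (apps (EFun f) vs).
Proof. intros G t Hs Hc. inversion Hs; subst. exfalso; eapply no_chead_fun; eauto.
 apply strict_apps_atom in H; [|exact I]. destruct H as [e [He Hst]]. eapply G; eauto. Qed.

Lemma good_pair v w : good v -> good w -> good (EPair v w).
Proof. intros Gv Gw t Hs Hc. inversion Hs; subst. destruct Hc as [c Hc]; discriminate.
 inversion H; subst; [apply Gv|apply Gw]; auto. Qed.

Lemma Pexpr_strict g e e' : Pexpr g e -> strict e e' -> Pexpr g e'.
Proof. intros P S x Hx Hc. apply P; auto. apply se_strict. eapply strict_trans; eauto. Qed.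

Lemma Inv_fine j : Inv j -> good (jout j) -> fine j.
Proof. destruct j; simpl; intros I G t R Ct.
 - destruct I as [Ge _]. destruct R as [R|[x [v [E R]]]]; [apply G|eapply Ge]; eauto.
 - destruct I as [Ge [Gd _]]. destruct R as [R|[R|[x [v [E R]]]]]; [apply G|apply Gd|eapply Ge]; eauto.
 - destruct R as [R|[v [Hi R]]]; [apply G|eapply I]; eauto. Qed.

Lemma Forall2_in_l {A B} (R : A -> B -> Prop) xs ys x : Forall2 R xs ys -> In x xs -> exists y, In y ys /\ R x y.
Proof. induction 1; simpl; intros Hi; [contradiction|]. destruct Hi as [<-|Hi]; eauto.
 destruct (IHForall2 Hi) as [y0 [? ?]]; eauto. Qed.

Hypothesis CF : cons_free p.

Ltac ih_for k := match goal with IH : forall t, In t _ -> valid _ t -> _,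
   Hval : forall t, In t _ -> valid _ t, E : droot k = _ |- _ =>
   let R := fresh "R" in assert (R := IH k ltac:(simpl; tauto) (Hval k ltac:(simpl; tauto))); rewrite E in R; simpl in R end.
Ltac kids0 := kids; repeat match goal with
  | H : [] = map droot ?ts |- _ => symmetry in H
  | H : map droot ?ts = [] |- _ => destruct ts; [clear H|discriminate H] end.
Ltac fin_kids := let t := fresh "t" in let Ht := fresh "Ht" in intros t Ht; simpl in Ht;
  repeat (destruct Ht as [<-|Ht]; [assumption|]); contradiction.

Lemma main : forall T, valid p T -> Inv (droot T) ->
  good (jout (droot T)) /\ forall j, occurs j T -> fine j.
Proof.
 induction T as [j ts IH] using dtree_ind'. intros Hv HI. simpl in HI |- *.
 enough (HG : good (jout j) /\ forall t, In t ts -> forall j', occurs j' t -> fine j').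
 { destruct HG as [G F]. split; auto. intros j' Ho. inversion Ho; subst. apply Inv_fine; auto. eauto. }
 inversion Hv as [? ? Hr Hval]; subst. clear Hv; pose proof (valid_node p j ts Hr Hval) as Hv.
 inversion Hr; subst; simpl in *.
 - kids0. split; [|fin_kids]. destruct HI as [Ge _]. eapply Ge; eauto.
 - kids0. ih_for k.
   destruct R as [G1 F1]; [simpl; tauto|]. split; [auto|fin_kids].
 - destruct HI as [Ge P].
   match goal with E : map _ (combine _ _) = map droot _ |- _ => rename E into Ec end.
   assert (KR : forall k, In k ts -> exists s b, In (s,b) (combine ss bs) /\ droot k = JEval g s b /\
      good b /\ forall j', occurs j' k -> fine j').
   { intros k Hk. destruct (con_kid_inv _ _ _ _ _ Ec Hk) as [s [b [Hsb Hkr]]].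
     exists s, b. split; auto. split; auto.
     assert (R := IH k Hk (Hval k Hk)). rewrite Hkr in R. simpl in R. apply R.
     split; auto. eapply Pexpr_strict; eauto. apply In_strict_apps. eapply in_combine_l; eauto. }
   split; [|intros k Hk; destruct (KR k Hk) as [? [? [? [? [? ?]]]]]; auto].
   intros x Hx Hcx. inversion Hx; subst.
   + assert (Hs : chead (apps (ECon c) ss)) by (exists c; rewrite head_apps; reflexivity).
     destruct (P _ (se_refl _) Hs) as [B|[l [El Gl]]].
     * rewrite (data_eval p _ Hv _ _ _ eq_refl (proj1 B)). exact B.
     * rewrite El in Hv. rewrite (pat_eval p _ Hv _ _ _ eq_refl) in Hcx |- *. apply Gl; [constructor|exact Hcx].
   + match goal with H0 : strict _ _ |- _ => apply strict_apps_atom in H0; [|exact I]; destruct H0 as [e [He Hst]] end.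
     destruct (combine_in_r ss bs e ltac:(assumption) He) as [s Hsb].
     destruct (con_kid _ _ _ _ _ _ Ec Hsb) as [k [Hk Hkr]].
     destruct (KR k Hk) as [s' [b' [_ [Hkr' [Gb _]]]]]. rewrite Hkr in Hkr'. injection Hkr' as <- <-.
     apply Gb; auto.
 - kids0. destruct HI as [Ge P].
   ih_for k. ih_for k0.
   destruct R as [G1 F1]. { split; auto. eapply Pexpr_strict; eauto. apply st_pair1; constructor. }
   destruct R0 as [G2 F2]. { split; auto. eapply Pexpr_strict; eauto. apply st_pair2; constructor. }
   split; [apply good_pair; auto|fin_kids].
 - kids0. destruct HI as [Ge P].
   ih_for k.
   destruct R as [G1 F1]. { split; auto. eapply Pexpr_strict; eauto. eapply st_choose; eauto; constructor. }
   split; [auto|fin_kids].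
 - kids0. destruct HI as [Ge P].
   ih_for k. ih_for k0.
   destruct R as [G1 F1]. { split; auto. eapply Pexpr_strict; eauto. apply st_if1; constructor. }
   destruct R0 as [G2 F2]. { split; [auto|split; [auto|split]]; eapply Pexpr_strict; eauto.
     apply st_if2; constructor. apply st_if3; constructor. }
   split; [auto|fin_kids].
 - kids0. destruct HI as [Ge [Gd [P2 P3]]].
   ih_for k. destruct R as [G1 F1]; [auto|]. split; [auto|fin_kids].
 - kids0. destruct HI as [Ge [Gd [P2 P3]]].
   ih_for k. destruct R as [G1 F1]; [auto|]. split; [auto|fin_kids].
 - kids0. destruct HI as [Ge P].
   ih_for k. ih_for k0. ih_for k1.
   destruct R as [G1 F1].
   { split; auto. intros x Hx Hcx. inversion Hx; subst.
     - exfalso. match goal with E : droot k = _ |- _ =>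
         pose proof (ceval p k (Hval k ltac:(simpl; tauto)) _ _ _ E Hcx) as C end.
       destruct Hcx as [c Hc]. rewrite head_apps in C. simpl in C. congruence.
     - apply P; auto. apply se_strict, st_app1; auto. }
   destruct R0 as [G2 F2]. { split; auto. eapply Pexpr_strict; eauto. apply st_app2; constructor. }
   destruct R1 as [G3 F3].
   { intros u Hu. apply in_app_or in Hu. destruct Hu as [Hu|[<-|[]]]; auto. eapply good_fun_inv; eauto. }
   split; [auto|fin_kids].
 - kids0. split; [apply good_fun; auto|fin_kids].
 - kids0. ih_for k.
   match goal with M : matches_with _ _ _ _ |- _ => destruct M as [Mf [Mg Mv]] end.
   assert (Gp : forall l, In l (cl_pats cl) -> good (inst g l)).
   { intros l Hl. destruct (Forall2_in_l _ _ _ _ Mv Hl) as [u [Hu <-]]. auto. }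
   destruct R as [G1 F1]; [|split; [auto|fin_kids]].
   split.
   + intros x u Hx. assert (Hin : In x (lhs_vars cl)) by (apply Mg; congruence).
     unfold lhs_vars in Hin. apply in_concat in Hin. destruct Hin as [xs [Hxs Hx']].
     apply in_map_iff in Hxs. destruct Hxs as [l [<- Hl]].
     eapply good_sub; [apply (Gp l Hl)|]. eapply pat_var_sub; eauto.
   + intros x Hx [c Hc].
     assert (Hcl : In cl p) by (match goal with E : p = _ |- _ => rewrite E end; apply in_or_app; right; left; reflexivity).
     destruct (CF cl Hcl x Hx c (eargs x)) as [D|[l [Hl S]]].
     { rewrite <- Hc. symmetry. apply apps_head. }
     * left. split; auto. right. exists cl. auto.
     * right. destruct (pat_sub g l x S (ex_intro _ _ Hc)) as [l' [-> S']].
       exists l'. split; auto. eapply good_sub; eauto.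
Qed.
End Main.
Theorem lemma2 :
  forall (p : program) (ds : list expr) (b : expr) (T : dtree),
    well_formed p -> cons_free p ->
    Forall is_data ds ->
    sem_tree p ds b T ->
    forall j, occurs j T ->
    forall t, judg_reaches j t ->
    forall c bs, t = apps (ECon c) bs ->
    inB p ds t.
Proof.
  intros p ds b T _ CF Hds [cl [rest [Ep [Hv Hr]]]] j Hocc t Hreach c bs Ht.
  assert (HI : Inv p ds (droot T)).
  { rewrite Hr. simpl. split.
    - intros x v E. unfold init_env in E. destruct (x <? length ds) eqn:Ex; [|discriminate].
      injection E as <-. apply Nat.ltb_lt in Ex. assert (Hin := nth_In ds (EVar x) Ex).
      intros t' Hs Hc. split.
      + eapply data_sub; eauto. rewrite Forall_forall in Hds; auto.
      + left. eauto.
    - intros x Hs Hc. exfalso. inversion Hs; subst.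
      + eapply no_chead_fun; eauto.
      + apply strict_apps_atom in H; [|exact I]. destruct H as [e [He Hst]].
        apply in_map_iff in He. destruct He as [y [<- _]].
        inversion Hst; subst. destruct Hc as [c0 Hc0]; discriminate.
        eapply strict_atom; eauto. exact I. }
  destruct (main p ds CF T Hv HI) as [_ Hall].
  apply (Hall j Hocc t Hreach). exists c. rewrite Ht, head_apps. reflexivity.
Qed.
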